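(* Let $\omega$ be a Kähler form with constant coefficients on $\mathbb{C}^n$ and let $\alpha$ be a real $(1,1)$-form with constant coefficients on $\mathbb{C}^n$ which is $m$-positive with respect to $\omega$, for some $1\le m\le n$. Then: (1) for every $1\le k\le m-1$ and every complex hyperplane $H\subset\mathbb{C}^n$, $\alpha|_H^k\wedge\omega|_H^{n-k-1}>0$ on $H$; (2) if $m\le n-1$ and moreover $\alpha$ is semipositive, then there is a proper complex linear subspace $S(\alpha)\subsetneq\mathbb{C}^n$ such that for every $v\in\mathbb{C}^n\setminus S(\alpha)$ we have $\alpha|_{H_v}^m\wedge\omega|_{H_v}^{n-m-1}>0$ on $H_v$, where $H_v=\{z\in\mathbb{C}^n : \sum_i v_iz_i=0\}$.
   Context: A real $(1,1)$-form $\alpha$ with constant coefficients is called $m$-positive with respect to $\omega$ if $\alpha^k\wedge\omega^{n-k}>0$ (i.e. a positive multiple of the standard volume form) for every $1\le k\le m$. For a top-degree form on a hyperplane $H$, ''$>0$'' means it is a positive multiple of a volume form of $H$ with its canonical orientation. $\alpha|_H$ denotes the restriction (pullback) to $H$. Semipositive means positive semidefinite. *)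

(* Defs.v *)
From mathcomp Require Import all_boot all_order all_algebra.
From mathcomp Require Import complex.
From mathcomp Require Import reals.
Set Implicit Arguments. Unset Strict Implicit. Unset Printing Implicit Defensive.
Import Order.TTheory GRing.Theory Num.Theory.
Local Open Scope ring_scope.

(* A real (1,1)-form with constant coefficients
   on C^p,  a = i * sum_{j,k} A j k dz_j /\ dzbar_k,  is encoded by its
   coefficient matrix A : 'M[C]_p; reality of the form means A^T = conj A
   (A is Hermitian). *)

Section Forms.
Variable R : realType.
Local Notation C := (complex R).

Definition conjm p q (M : 'M[C]_(p, q)) : 'M[C]_(p, q) := map_mx Num.conj M.

Definition real11 p (A : 'M[C]_p) : Prop := A^T = conjm A.

Definition hform p (A : 'M[C]_p) (xi : 'cV[C]_p) : C :=
  (xi^T *m A *m conjm xi) 0 0.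

Definition kahler p (W : 'M[C]_p) : Prop :=
  real11 W /\ forall xi : 'cV[C]_p, xi != 0 -> 0 < hform W xi.

Definition semipositive p (A : 'M[C]_p) : Prop :=
  real11 A /\ forall xi : 'cV[C]_p, 0 <= hform A xi.

(* The coefficient c of  a^k /\ w^(p-k) = c * vol,  where
   vol = prod_j (i dz_j /\ dzbar_j) is the standard (canonically oriented)
   volume form.  Expanding (w + t a)^p = p! det(W + t A) vol gives
   a^k /\ w^(p-k) = k! (p-k)! [t^k] det(W + t A) vol. *)
Definition wedge_coef p (k : nat) (A W : 'M[C]_p) : C :=
  (k`! * (p - k)`!)%:R *
  (\det (map_mx polyC W + 'X *: map_mx polyC A))`_k.

Definition m_positive p (m : nat) (W A : 'M[C]_p) : Prop :=
  forall k, (1 <= k <= m)%N -> 0 < wedge_coef k A W.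

(* Pull-back of the form with matrix A along the linear map C^q -> C^p,
   w |-> B w (e.g. B = a basis of a subspace H, as columns):
   z = B w gives  sum A j k dz_j dzbar_k = sum (B^T A conj B) l l' dw_l dwbar_l'. *)
Definition restr p q (B : 'M[C]_(p, q)) (A : 'M[C]_p) : 'M[C]_q :=
  B^T *m A *m conjm B.

End Forms.

(* Main.v *)
Require Import Defs.
From mathcomp Require Import all_boot all_order all_algebra.
From mathcomp Require Import complex.
From mathcomp Require Import reals.
From mathcomp Require Import spectral sesquilinear.
From mathcomp Require Import ring lra zify.
Set Implicit Arguments. Unset Strict Implicit. Unset Printing Implicit Defensive.
Import Order.TTheory GRing.Theory Num.Theory.
Local Open Scope ring_scope.

Section Generic.
Variable T : comNzRingType.

Lemma liftNe n (h : 'I_n) (i : 'I_n.-1) : (lift h i == h) = false.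
Proof. by rewrite eq_sym (negbTE (neq_lift _ _)). Qed.

Lemma sign_nn (k : nat) : (-1) ^+ (k + k) = 1 :> T.
Proof. by rewrite addnn -mul2n exprM sqrrN expr1n expr1n. Qed.

Lemma cof_last n (Y : 'M[T]_n.+1) :
  \det (Y + delta_mx ord_max ord_max) =
  \det Y + \det (row' ord_max (col' ord_max Y)).
Proof.
rewrite (expand_det_row _ ord_max) (expand_det_row Y ord_max).
have Hc : forall j, cofactor (Y + delta_mx ord_max ord_max) ord_max j =
                    cofactor Y ord_max j.
  move=> j; rewrite /cofactor; congr (_ * \det _).
  apply/matrixP => a b; rewrite !mxE.
  by rewrite liftNe /= addr0.
under eq_bigr => j _ do rewrite Hc !mxE mulrDl.
rewrite big_split /=; congr (_ + _).
rewrite (bigD1 ord_max) //= !eqxx /= mul1r big1 ?addr0.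
  by rewrite /cofactor sign_nn mul1r.
by move=> j hj; rewrite (negbTE hj) mul0r.
Qed.

Lemma prod_lift_ne n (d : 'I_n.+1 -> T) (i : 'I_n) :
  \prod_(j | j != lift ord_max i) d j = d ord_max * \prod_(j < n | j != i) d (lift ord_max j).
Proof.
rewrite (bigD1_ord ord_max) ?neq_lift //=; congr (_ * _).
by apply: eq_bigl => j; rewrite (inj_eq (@lift_inj _ _)).
Qed.

Lemma det_rank1 n (d a b : 'I_n -> T) :
  \det (\matrix_(i, j) ((i == j)%:R * d i + a i * b j)) =
  \prod_i d i + \sum_i a i * b i * \prod_(j | j != i) d j.
Proof.
elim: n d a b => [|n IH] d a b.
  by rewrite det_mx00 big_ord0 big_ord0 addr0.
set M := \matrix_(i, j) _.
pose M1 := \matrix_(i, j) (if i == ord_max then (i == j)%:R * d i else M i j).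
pose M2 := \matrix_(i, j) (if i == ord_max then b j else M i j).
have -> : \det M = 1 * \det M1 + a ord_max * \det M2.
  apply: (@determinant_multilinear _ _ M M1 M2 ord_max).
  - apply/rowP => j; rewrite /M1 /M2 /M !mxE eqxx mul1r.
    by [].
  - by apply/matrixP => i j; rewrite /M1 /M2 /M !mxE liftNe.
  - by apply/matrixP => i j; rewrite /M1 /M2 /M !mxE liftNe.
have dM1 : \det M1 = d ord_max *
   \det (\matrix_(i, j) ((i == j)%:R * d (lift ord_max i) +
          a (lift ord_max i) * b (lift ord_max j)) : 'M_n).
  rewrite (expand_det_row _ ord_max) (bigD1 ord_max) //= big1 ?addr0.
    rewrite !mxE !eqxx mul1r /cofactor sign_nn mul1r; congr (_ * \det _).
    apply/matrixP => i j; rewrite !mxE liftNe.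
    by rewrite (inj_eq (@lift_inj _ _)).
  by move=> j hj; rewrite !mxE eqxx eq_sym (negbTE hj) mul0r mul0r.
pose L := \matrix_(i, j) ((i == j)%:R + (j == ord_max)%:R * (i != ord_max)%:R * a i) : 'M[T]_n.+1.
pose Dt := \matrix_(i, j) (if i == ord_max then b j else (i == j)%:R * d i) : 'M[T]_n.+1.
have eM2 : M2 = L *m Dt.
  apply/matrixP => i j.
  have E : (L *m Dt) i j = Dt i j + (i != ord_max)%:R * a i * Dt ord_max j.
    rewrite !mxE.
    under eq_bigr => k _ do rewrite !mxE mulrDl.
    rewrite big_split /=; congr (_ + _).
      rewrite (bigD1 i) //= eqxx mul1r big1 ?addr0 ?mxE //.
      by move=> k hk; rewrite eq_sym (negbTE hk) mul0r.
    rewrite (bigD1 ord_max) //= eqxx mul1r big1 ?addr0.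
      by [].
    by move=> k /negbTE ->; rewrite !mul0r.
  rewrite E /M2 /M /Dt !mxE.
  have [->|hi] := eqVneq i ord_max; first by rewrite eqxx /= mul0r mul0r addr0.
  by rewrite eqxx /= mul1r.
have dL : \det L = 1.
  rewrite -det_tr det_trig.
    by apply: big1 => i _; rewrite !mxE eqxx; case: (i == ord_max); rewrite ?mulr0 ?mul0r ?addr0.
  apply/is_trig_mxP => i j hij; rewrite !mxE.
  have -> : (j == i) = false by apply/negbTE; rewrite neq_ltn hij orbT.
  have -> : (i == ord_max) = false.
    by apply/negbTE/negP => /eqP hi; move: hij (ltn_ord j); rewrite hi /= => h1 h2; lia.
  by rewrite !mul0r add0r.
have dDt : \det Dt = b ord_max * \prod_(j | j != ord_max) d j.
  rewrite det_trig.
    rewrite (bigD1 ord_max) //= !mxE eqxx; congr (_ * _).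
    by apply: eq_bigr => i /negbTE hi; rewrite !mxE hi eqxx mul1r.
  apply/is_trig_mxP => i j hij; rewrite !mxE.
  have -> : (i == ord_max) = false.
    by apply/negbTE/negP => /eqP hi; move: hij (ltn_ord j); rewrite hi /= => h1 h2; lia.
  by rewrite /= -val_eqE /= (ltn_eqF hij) mul0r.

rewrite dM1 eM2 det_mulmx dL mul1r dDt IH.
rewrite (bigD1_ord ord_max (P := xpredT)) //= (bigD1_ord ord_max (P := xpredT)) //=.
under [X in _ = _ + (_ + X)]eq_bigr => i _ do rewrite prod_lift_ne.
have eS : d ord_max * (\sum_(i < n) a (lift ord_max i) * b (lift ord_max i) *
      \prod_(j < n | j != i) d (lift ord_max j)) =
   \sum_(i < n) a (lift ord_max i) * b (lift ord_max i) *
      (d ord_max * \prod_(j < n | j != i) d (lift ord_max j)).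
  by rewrite mulr_sumr; apply: eq_bigr => i _; ring.
rewrite mulrDr eS.
ring.
Qed.

Lemma row'_mul m n p (i : 'I_m) (A : 'M[T]_(m, n)) (B : 'M[T]_(n, p)) :
  row' i (A *m B) = row' i A *m B.
Proof. by apply/matrixP => a b; rewrite !mxE; apply: eq_bigr => k _; rewrite !mxE. Qed.

Lemma col'_mul m n p (j : 'I_p) (A : 'M[T]_(m, n)) (B : 'M[T]_(n, p)) :
  col' j (A *m B) = A *m col' j B.
Proof. by apply/matrixP => a b; rewrite !mxE; apply: eq_bigr => k _; rewrite !mxE. Qed.

End Generic.

Section BigLift.
Lemma big_lift_ne (T : Type) (idx : T) (op : Monoid.com_law idx) n (i : 'I_n) (F : 'I_n -> T) :
  \big[op/idx]_(j | j != i) F j = \big[op/idx]_(j < n.-1) F (lift i j).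
Proof.
rewrite big_mkcond (bigD1_ord i) //= eqxx Monoid.mul1m.
by apply: eq_bigr => j _; rewrite eq_sym neq_lift.
Qed.
End BigLift.

Section RealPart.
Variable R : realFieldType.

Definition Pe n (mu : 'I_n -> R) : {poly R} := \prod_(i < n) (1 + mu i *: 'X).
Definition sig n (mu : 'I_n -> R) k := (Pe mu)`_k.

Lemma coef_lin0 (c : R) p : ((1 + c *: 'X) * p)`_0 = p`_0.
Proof. by rewrite mulrDl mul1r coefD -scalerAl coefZ coefXM /= mulr0 addr0. Qed.

Lemma coef_linS (c : R) p k : ((1 + c *: 'X) * p)`_k.+1 = p`_k.+1 + c * p`_k.
Proof. by rewrite mulrDl mul1r coefD -scalerAl coefZ coefXM. Qed.

Lemma Pe_S n (mu : 'I_n.+1 -> R) :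
  Pe mu = (1 + mu ord0 *: 'X) * Pe (fun i : 'I_n => mu (lift ord0 i)).
Proof. by rewrite /Pe big_ord_recl. Qed.

Lemma Pe_D n (mu : 'I_n.+1 -> R) (i : 'I_n.+1) :
  Pe mu = (1 + mu i *: 'X) * Pe (fun j : 'I_n => mu (lift i j)).
Proof. by rewrite /Pe (bigD1_ord i). Qed.

Lemma sig0 n (mu : 'I_n -> R) : sig mu 0 = 1.
Proof.
elim: n mu => [|n IH] mu; first by rewrite /sig /Pe big_ord0 coef1.
by rewrite /sig Pe_S coef_lin0; exact: IH.
Qed.

Lemma sig_big n (mu : 'I_n -> R) k : (n < k)%N -> sig mu k = 0.
Proof.
elim: n mu k => [|n IH] mu k.
  by case: k => // k _; rewrite /sig /Pe big_ord0 coef1.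
case: k => // k; rewrite ltnS => hk.
rewrite /sig Pe_S coef_linS.
have h1 := IH (fun i : 'I_n => mu (lift ord0 i)) k.+1 (ltnW hk).
have h2 := IH (fun i : 'I_n => mu (lift ord0 i)) k hk.
by rewrite /sig in h1 h2; rewrite h1 h2 mulr0 addr0.
Qed.

Lemma sigS n (mu : 'I_n.+1 -> R) k :
  sig mu k.+1 = sig (fun i : 'I_n => mu (lift ord0 i)) k.+1 +
                mu ord0 * sig (fun i : 'I_n => mu (lift ord0 i)) k.
Proof. by rewrite /sig Pe_S coef_linS. Qed.

Lemma sigD n (mu : 'I_n.+1 -> R) (i : 'I_n.+1) k :
  sig mu k.+1 = sig (fun j : 'I_n => mu (lift i j)) k.+1 +
                mu i * sig (fun j : 'I_n => mu (lift i j)) k.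
Proof. by rewrite /sig (Pe_D mu i) coef_linS. Qed.

Lemma newton_top n (mu : 'I_n.+2 -> R) :
  2%:R * (n.+2)%:R * (sig mu n * sig mu n.+2) <= (n.+1)%:R * sig mu n.+1 ^+ 2.
Proof.
elim: n mu => [|n IH] mu.
  rewrite !sigS !sig0 !sig_big //.
  have -> : (2%:R : R) = 2 by [].
  rewrite ?mulr1 ?mulr0 ?addr0 ?mul1r ?add0r.
  set x := mu ord0; set y := mu (lift ord0 ord0).
  have := sqr_ge0 (x - y); nra.
rewrite (sigS mu n.+2) (sigS mu n.+1) (sigS mu n).
set x := mu ord0; set mu' := (fun i : 'I_n.+2 => _).
rewrite (sig_big mu' (ltnSn n.+2)) add0r.
have IH' := IH mu'.
move: IH'.
set a := sig mu' n.+2; set b := sig mu' n.+1; set c := sig mu' n.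
move=> IH'.
pose N : R := n%:R.
have hN : 0 <= N by rewrite ler0n.
have e3 : (n.+3%:R : R) = N + 3 by rewrite /N -addn3 natrD.
have e2 : (n.+2%:R : R) = N + 2 by rewrite /N -addn2 natrD.
have e1 : (n.+1%:R : R) = N + 1 by rewrite /N -addn1 natrD.
rewrite e3 e2; rewrite e2 e1 in IH'.
have h1 : 0 <= x ^+ 2 * ((N + 1) * b ^+ 2 - 2 * (N + 2) * (c * a)).
  by apply: mulr_ge0; [exact: sqr_ge0 | rewrite subr_ge0].
have h2 : 0 <= ((N + 2) * a - x * b) ^+ 2 by exact: sqr_ge0.
nra.
Qed.

Lemma eq_sig n (f g : 'I_n -> R) k : f =1 g -> sig f k = sig g k.
Proof.
by move=> h; rewrite /sig /Pe (eq_bigr (fun i => 1 + g i *: 'X)) // => i _; rewrite h.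
Qed.

Lemma lift_lift0 n (i : 'I_n.+1) (j : 'I_n) :
  lift (lift ord0 i) (lift ord0 j) = lift ord0 (lift i j).
Proof. by apply: val_inj; rewrite /= /bump /= ltnS; case: leqP. Qed.

Lemma lift_lift00 n (i : 'I_n.+1) : lift (lift ord0 i) ord0 = ord0 :> 'I_n.+2.
Proof. by apply: val_inj. Qed.

Lemma sum_lift n (mu : 'I_n.+1 -> R) j :
  \sum_(i < n.+1) sig (fun k : 'I_n => mu (lift i k)) j = (n.+1 - j)%:R * sig mu j.
Proof.
elim: n mu j => [|n IH] mu [|j].
- by rewrite big_ord1 !sig0 mulr1.
- have -> : (1 - j.+1 = 0)%N by lia.
  by rewrite big_ord1 sig_big // mul0r.
- under eq_bigr do rewrite sig0.
  by rewrite sig0 mulr1 sumr_const card_ord subn0.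
rewrite big_ord_recl.
set mu' := (fun k : 'I_n.+1 => mu (lift ord0 k)).
have e : forall i' : 'I_n.+1, sig (fun k : 'I_n.+1 => mu (lift (lift ord0 i') k)) j.+1 =
   sig (fun k : 'I_n => mu' (lift i' k)) j.+1 + mu ord0 * sig (fun k : 'I_n => mu' (lift i' k)) j.
  move=> i'; rewrite sigS lift_lift00; congr (_ + _ * _); apply: eq_sig => k;
  by rewrite /mu' lift_lift0.
under eq_bigr do rewrite e.
rewrite big_split /= -mulr_sumr !IH (sigS mu j).
rewrite -/mu'.
have [hj|hj] := leqP j n.
  have -> : (n.+2 - j.+1 = (n.+1 - j.+1) + 1)%N by lia.
  have -> : (n.+1 - j = (n.+1 - j.+1) + 1)%N by lia.
  rewrite natrD; ring.
have -> : (n.+2 - j.+1 = 0)%N by lia.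
have -> : (n.+1 - j = 0)%N by lia.
have -> : (n.+1 - j.+1 = 0)%N by lia.
by rewrite sig_big ?mul0r ?mulr0 ?addr0 //; lia.
Qed.

Hypothesis Dhyp : forall n (mu : 'I_n.+1 -> R), exists nu : 'I_n -> R,
  forall j, (n.+1)%:R * sig nu j = (n.+1 - j)%:R * sig mu j.

Lemma newton n (mu : 'I_n -> R) k : (k.+1 < n)%N ->
  (k.+2)%:R * (n - k)%:R * (sig mu k * sig mu k.+2) <=
  (k.+1)%:R * (n - k.+1)%:R * sig mu k.+1 ^+ 2.
Proof.
elim: n mu k => [|n IH] mu k // hk.
have [ek|nek] := eqVneq k.+2 n.+1.
  case: ek => ek; subst n.
  have -> : (k.+2 - k = 2)%N by lia.
  have -> : (k.+2 - k.+1 = 1)%N by lia.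
  by rewrite mulr1 (mulrC _ 2%:R); exact: newton_top.
have hk' : (k.+1 < n)%N by rewrite ltn_neqAle -ltnS hk andbT; apply: contra nek => /eqP->.
have [nu hnu] := Dhyp mu.
have := IH nu k hk'.
have hn0 : (0 < n.+1%:R :> R) by rewrite ltr0n.
have s1 : sig mu k = (n.+1)%:R * sig nu k / (n.+1 - k)%:R.
  rewrite hnu mulrAC divff ?mul1r // pnatr_eq0 subn_eq0 -ltnNge; lia.
have s2 : sig mu k.+1 = (n.+1)%:R * sig nu k.+1 / (n.+1 - k.+1)%:R.
  rewrite hnu mulrAC divff ?mul1r // pnatr_eq0 subn_eq0 -ltnNge; lia.
have s3 : sig mu k.+2 = (n.+1)%:R * sig nu k.+2 / (n.+1 - k.+2)%:R.
  rewrite hnu mulrAC divff ?mul1r // pnatr_eq0 subn_eq0 -ltnNge; lia.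
rewrite s1 s2 s3.
set a := sig nu k; set b := sig nu k.+1; set c := sig nu k.+2.
pose M : R := n%:R.
pose K : R := k%:R.
have eN : n.+1 = (n + 1)%N by rewrite addn1.
have hKM : K + 2 <= M.
  rewrite /K /M -(natrD R k 2) ler_nat; lia.
have hK : 0 <= K by rewrite ler0n.
have E8 : (n.+1%:R : R) = M + 1 by rewrite -addn1 natrD.
have E7 : (k.+1%:R : R) = K + 1 by rewrite -addn1 natrD.
have E6 : (k.+2%:R : R) = K + 2 by rewrite -addn2 natrD.
have E1 : ((n.+1 - k)%:R : R) = M + 1 - K by rewrite natrB ?E8 //; lia.
have E2 : ((n.+1 - k.+1)%:R : R) = M - K by rewrite subSS natrB //; lia.
have E3 : ((n.+1 - k.+2)%:R : R) = M - K - 1.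
  by rewrite subSS natrB ?E7 ?opprD ?addrA //; lia.
have E4 : ((n - k)%:R : R) = M - K by rewrite natrB //; lia.
have E5 : ((n - k.+1)%:R : R) = M - K - 1.
  by rewrite natrB ?E7 ?opprD ?addrA //; lia.

rewrite ?E1 ?E2 ?E3 ?E4 ?E5 ?E6 ?E7 ?E8 => ih.
have p1 : 0 < M + 1 - K by lra.
have p2 : 0 < M - K by lra.
have p3 : 0 < M - K - 1 by lra.
pose f := (M + 1) ^+ 2 / ((M - K - 1) * (M - K)).
have hf : 0 <= f.
  by apply: divr_ge0; [exact: sqr_ge0 | apply: mulr_ge0; lra].
have -> : (K + 2) * (M + 1 - K) * ((M + 1) * a / (M + 1 - K) * ((M + 1) * c / (M - K - 1)))
   = f * ((K + 2) * (M - K) * (a * c)).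
  by rewrite /f; field; rewrite ?gt_eqF // ?mulf_neq0 ?gt_eqF.
have -> : (K + 1) * (M - K) * ((M + 1) * b / (M - K)) ^+ 2
   = f * ((K + 1) * (M - K - 1) * b ^+ 2).
  by rewrite /f; field; rewrite ?gt_eqF // ?mulf_neq0 ?gt_eqF.
move: ih; set u := (K + 2) * _ * _; set w := (K + 1) * _ * _ => ih.
exact: ler_wpM2l.
Qed.

Lemma wnewton n (mu : 'I_n -> R) k : sig mu k * sig mu k.+2 <= sig mu k.+1 ^+ 2.
Proof.
have [hk|hk] := ltnP k.+1 n; last first.
  by rewrite (sig_big mu (_ : n < k.+2)%N) ?mulr0 ?sqr_ge0 //; lia.
have := newton mu hk.
pose K : R := k%:R; pose M : R := n%:R.
have hKM : K + 2 <= M by rewrite /K /M -(natrD R k 2) ler_nat; lia.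
have hK : 0 <= K by rewrite ler0n.
have E7 : (k.+1%:R : R) = K + 1 by rewrite -addn1 natrD.
have E6 : (k.+2%:R : R) = K + 2 by rewrite -addn2 natrD.
have E4 : ((n - k)%:R : R) = M - K by rewrite natrB //; lia.
have E5 : ((n - k.+1)%:R : R) = M - K - 1.
  by rewrite natrB ?E7 ?opprD ?addrA //; lia.
rewrite E4 E5 E6 E7.
set p := sig mu k * _; set s := sig mu k.+1.
have hs := sqr_ge0 s.
move=> h.
have [hp|hp] := lerP p 0; first by lra.
have h1 : (K + 1) * (M - K - 1) < (K + 2) * (M - K) by nra.
have h2 : 0 < (K + 1) * (M - K - 1) by apply: mulr_gt0; lra.
nra.
Qed.

Lemma garding n (lam : 'I_n.+1 -> R) m (i : 'I_n.+1) :
  (forall k, (0 < k <= m)%N -> 0 < sig lam k) ->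
  forall k, (k < m)%N -> 0 < sig (fun j : 'I_n => lam (lift i j)) k.
Proof.
move=> hpos; elim=> [|k IH] hk; first by rewrite sig0 ltr01.
have IH' := IH (ltnW hk).
have h1 := hpos k.+1 (ltnW hk).
have h2 := hpos k.+2 hk.
rewrite (sigD lam i) in h1; rewrite (sigD lam i) in h2.
have hw := wnewton (fun j : 'I_n => lam (lift i j)) k.
move: h1 h2 hw IH'.
set x := lam i.
set s0 := sig _ k; set s1 := sig _ k.+1; set s2 := sig _ k.+2.
move=> h1 h2 hw h0.
have [hx|hx] := lerP x 0; first by nra.
rewrite ltNge; apply/negP => hs1.
have : s1 * s1 < s0 * s2 by nra.
nra.
Qed.
Definition cnt n (lam : 'I_n -> R) := (\sum_(i < n) nat_of_bool (0 < lam i)%R)%N.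

Lemma sig_nonneg n (lam : 'I_n -> R) : (forall i, 0 <= lam i) ->
  forall k, 0 <= sig lam k /\ ((0 < sig lam k) = (k <= cnt lam)%N).
Proof.
elim: n lam => [|n IH] lam hl k.
  rewrite /cnt big_ord0; case: k => [|k]; first by rewrite sig0 ler01 ltr01.
  by rewrite sig_big // ltxx lexx.
rewrite /cnt big_ord_recl -/(cnt _).
set lam' := (fun i : 'I_n => lam (lift ord0 i)).
have hl' : forall i, 0 <= lam' i by move=> i; exact: hl.
case: k => [|k]; first by rewrite sig0 ler01 ltr01.
rewrite sigS -/lam'.
have [a1 a2] := IH lam' hl' k.+1.
have [b1 b2] := IH lam' hl' k.
have hx := hl ord0.
split; first by apply: addr_ge0 => //; apply: mulr_ge0.
have [hx0|hx0] := eqVneq (lam ord0) 0.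
  rewrite hx0 mul0r addr0 ltxx add0n; exact: a2.
have hxp : 0 < lam ord0 by rewrite lt_def hx0 hx.
rewrite hxp add1n ltnS -b2.
apply/idP/idP => [h|h].
  rewrite lt_def; apply/andP; split; last exact: b1.
  apply/negP => /eqP h0; move: h; rewrite h0 mulr0 addr0 a2 => h'.
  by move: (b2); rewrite h0 ltxx => /esym; rewrite (leq_trans (leqnSn k) h').
by apply: ltr_wpDl => //; apply: mulr_gt0.
Qed.

Lemma cnt_lift n (lam : 'I_n.+1 -> R) (i : 'I_n.+1) :
  cnt lam = (nat_of_bool (0 < lam i)%R + cnt (fun j : 'I_n => lam (lift i j)))%N.
Proof. by rewrite /cnt (bigD1_ord i). Qed.
End RealPart.

Section Cx.
Variable R : realType.
Local Notation C := (complex R).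
Local Notation rc := (real_complex R).

Lemma conjmM p q r (A : 'M[C]_(p, q)) (B : 'M[C]_(q, r)) :
  conjm (A *m B) = conjm A *m conjm B.
Proof. exact: map_mxM. Qed.

Lemma conjmK p q (A : 'M[C]_(p, q)) : conjm (conjm A) = A.
Proof. by apply/matrixP => i j; rewrite !mxE conjCK. Qed.

Lemma conjm_tr p q (A : 'M[C]_(p, q)) : conjm A^T = (conjm A)^T.
Proof. by rewrite /conjm map_trmx. Qed.

Lemma restr_comp p q r (B : 'M[C]_(q, r)) (Q : 'M[C]_(p, q)) M :
  restr B (restr Q M) = restr (Q *m B) M.
Proof. by rewrite /restr trmx_mul conjmM !mulmxA. Qed.

Lemma restr1 p (M : 'M[C]_p) : restr 1%:M M = M.
Proof.
rewrite /restr trmx1 mul1mx.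
have -> : conjm (1%:M : 'M[C]_p) = 1%:M by rewrite /conjm map_mx1.
by rewrite mulmx1.
Qed.

Lemma det_conjm p (P : 'M[C]_p) : \det (conjm P) = (\det P)^*.
Proof. exact: det_map_mx. Qed.

Lemma det_restr p (P M : 'M[C]_p) :
  \det (restr P M) = \det P * (\det P)^* * \det M.
Proof. by rewrite /restr !det_mulmx det_tr det_conjm mulrAC. Qed.

Lemma hform_restr p q (B : 'M[C]_(p, q)) M w :
  hform (restr B M) w = hform M (B *m w).
Proof. by rewrite /hform /restr trmx_mul conjmM !mulmxA. Qed.

Lemma real11_restr p q (B : 'M[C]_(p, q)) M : real11 M -> real11 (restr B M).
Proof.
rewrite /real11 /restr => hM.
by rewrite !trmx_mul !conjmM trmxK hM conjm_tr conjmK mulmxA.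
Qed.

Lemma real11_herm p (M : 'M[C]_p) : real11 M -> M \is hermsymmx.
Proof.
move=> hM; apply/is_hermitianmxP; rewrite expr0 scale1r.
by rewrite [M^T]hM; apply/esym/conjmK.
Qed.

Lemma hform_diag p (r : 'rV[C]_p) xi :
  hform (diag_mx r) xi = \sum_j r 0 j * (xi j 0 * (xi j 0)^*).
Proof.
rewrite /hform mul_mx_diag !mxE; apply: eq_bigr => j _; rewrite !mxE.
by rewrite mulrCA mulrA.
Qed.

Lemma hform_diag_delta p (r : 'rV[C]_p) i :
  hform (diag_mx r) (delta_mx i 0) = r 0 i.
Proof.
rewrite hform_diag (bigD1 i) //= big1 ?addr0.
  by rewrite mxE !eqxx /= conjC1 !mulr1.
by move=> j hj; rewrite mxE (negbTE hj) /= mul0r mulr0.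
Qed.

Definition dg p (l : 'I_p -> R) : 'M[C]_p := diag_mx (\row_i rc (l i)).

Lemma spec p (M : 'M[C]_p) : real11 M ->
  exists P : 'M[C]_p, exists d : 'I_p -> R,
    P \in unitmx /\ M = restr (conjm P) (dg d) /\ restr (conjm P) 1%:M = 1%:M.
Proof.
move=> hM; have hH := real11_herm hM.
have hN := hermitian_normalmx hH.
have hP := spectral_unitarymx M.
move/orthomx_spectralP: hN => eM.
have hr := hermitian_spectral_diag_real hH.
exists (spectralmx M), (fun i => complex.Re (spectral_diag M 0 i)).
split; first exact: spectral_unit.
have eD : dg (fun i => complex.Re (spectral_diag M 0 i)) = diag_mx (spectral_diag M).
  congr diag_mx; apply/rowP => i; rewrite mxE RRe_real //.
  exact: (mxOverP hr).
split.
  rewrite eD /restr conjmK -conjm_tr.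
  by rewrite {1}eM invmx_unitary.
rewrite /restr conjmK mulmx1 -conjm_tr /conjm.
have := invmx_unitary hP => <-.
by rewrite mulVmx // spectral_unit.
Qed.

Lemma unit_conjm p (P : 'M[C]_p) : P \in unitmx -> conjm P \in unitmx.
Proof. by rewrite !unitmxE det_conjm !unitfE conjC_eq0. Qed.

Lemma ltc0R (x : R) : (0 < rc x) = (0 < x).
Proof. by rewrite ltcE /= eqxx. Qed.

Lemma lec0R (x : R) : (0 <= rc x) = (0 <= x).
Proof. by rewrite lecE /= eqxx. Qed.

Lemma conjm_dg p (l : 'I_p -> R) : conjm (dg l) = dg l.
Proof.
apply/matrixP => i j; rewrite !mxE.
by case: (i == j); rewrite /= ?mulr1n ?mulr0n ?conjC0 //; exact: conjc_real.
Qed.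

Lemma dg_mul p (l l' : 'I_p -> R) : dg l *m dg l' = dg (fun i => l i * l' i).
Proof.
rewrite /dg mulmx_diag; congr diag_mx; apply/rowP => i; rewrite !mxE.
by rewrite rmorphM.
Qed.

Lemma dg_unit p (l : 'I_p -> R) : (forall i, l i != 0) -> dg l \in unitmx.
Proof.
move=> hl; rewrite unitmxE /dg det_diag unitfE; apply/prodf_neq0 => i _.
by rewrite mxE; apply: contra (hl i) => /eqP h; apply/eqP; apply: (@complexI R); rewrite h.
Qed.

Lemma simdiag p (W A : 'M[C]_p) : kahler W -> real11 A ->
  exists R0 : 'M[C]_p, exists l : 'I_p -> R,
    R0 \in unitmx /\ W = restr R0 1%:M /\ A = restr R0 (dg l).
Proof.
case=> hW hpos hA.
have [P1 [w [hP1 [eW _]]]] := spec hW.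
have wpos : forall i, 0 < w i.
  move=> i; pose xi : 'cV[C]_p := invmx (conjm P1) *m delta_mx i 0.
  have hxi : xi != 0.
    apply/negP => /eqP h.
    have : conjm P1 *m xi = delta_mx i 0 by rewrite /xi mulKVmx // unit_conjm.
    rewrite h mulmx0 => /matrixP /(_ i 0); rewrite !mxE !eqxx /= => /eqP.
    by rewrite eq_sym oner_eq0.
  have := hpos xi hxi; rewrite eW hform_restr /xi mulKVmx ?unit_conjm //.
  by rewrite hform_diag_delta mxE ltc0R.
pose s i := Num.sqrt (w i).
pose S := dg s.
have eS : restr S 1%:M = dg w.
  rewrite /restr mulmx1 /S conjm_dg /dg tr_diag_mx -/(dg s) dg_mul.
  apply/matrixP => a b; rewrite !mxE /s -expr2 sqr_sqrtr //.
  exact: ltW.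
pose R1 := S *m conjm P1.
have eW1 : W = restr R1 1%:M by rewrite /R1 -restr_comp eS -eW.
have hR1 : R1 \in unitmx.
  rewrite unitmx_mul unit_conjm // andbT /S dg_unit // => i.
  by rewrite /s gt_eqF // sqrtr_gt0.
have [P2 [l [hP2 [eA1 e1]]]] := spec (real11_restr (invmx R1) hA).
exists (conjm P2 *m R1), l.
split; first by rewrite unitmx_mul unit_conjm.
split; first by rewrite -restr_comp e1.
rewrite -restr_comp -eA1 restr_comp mulVmx // restr1 //.
Qed.
Definition polyM p q (M : 'M[C]_(p, q)) : 'M[{poly C}]_(p, q) := map_mx polyC M.
Definition Gp p (W A : 'M[C]_p) : {poly C} := \det (polyM W + 'X *: polyM A).

Lemma wedgeE p k (W A : 'M[C]_p) :
  wedge_coef k A W = (k`! * (p - k)`!)%:R * (Gp W A)`_k.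
Proof. by []. Qed.

Lemma polyM_restr p q (B : 'M[C]_(p, q)) M :
  polyM (restr B M) = (polyM B)^T *m polyM M *m polyM (conjm B).
Proof. by rewrite /polyM /restr !map_mxM map_trmx. Qed.

Lemma detP_restr p (P : 'M[C]_p) (M : 'M[{poly C}]_p) :
  \det ((polyM P)^T *m M *m polyM (conjm P)) = (\det P * (\det P)^*)%:P * \det M.
Proof.
rewrite !det_mulmx det_tr /polyM !det_map_mx polyCM.
by rewrite mulrAC.
Qed.

Lemma Gp_restr_gen p q (B : 'M[C]_(p, q)) W A :
  Gp (restr B W) (restr B A) =
  \det ((polyM B)^T *m (polyM W + 'X *: polyM A) *m polyM (conjm B)).
Proof. by rewrite /Gp !polyM_restr mulmxDr mulmxDl -scalemxAr -scalemxAl. Qed.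

Lemma Gp_restr_sq p (P W A : 'M[C]_p) :
  Gp (restr P W) (restr P A) = (\det P * (\det P)^*)%:P * Gp W A.
Proof. by rewrite Gp_restr_gen detP_restr. Qed.

Lemma mapPe_lin (c : R) : map_poly rc (1 + c *: 'X) = 1 + (rc c)%:P * 'X.
Proof. by rewrite -mul_polyC rmorphD rmorph1 rmorphM /= map_polyC map_polyX. Qed.

Lemma mapPe p (l : 'I_p -> R) :
  map_poly rc (Pe l) = \prod_i (1 + (rc (l i))%:P * 'X).
Proof. by rewrite /Pe rmorph_prod; apply: eq_bigr => i _; exact: mapPe_lin. Qed.

Lemma Gp_dg p (l : 'I_p -> R) : Gp 1%:M (dg l) = map_poly rc (Pe l).
Proof.
rewrite /Gp /polyM map_mx1 /dg map_diag_mx mapPe.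
have -> : 1%:M + 'X *: diag_mx (map_mx polyC (\row_i rc (l i))) =
   diag_mx (\row_i (1 + (rc (l i))%:P * 'X)) :> 'M[{poly C}]_p.
  apply/matrixP => i j; rewrite !mxE.
  case: (i == j); rewrite /= ?mulr1n ?mulr0n ?addr0 ?mulr0 ?add0r //.
  by rewrite mulrC.
by rewrite det_diag; apply: eq_bigr => i _; rewrite mxE.
Qed.

Lemma Gp_sim p (R0 : 'M[C]_p) l :
  Gp (restr R0 1%:M) (restr R0 (dg l)) = (\det R0 * (\det R0)^*)%:P * map_poly rc (Pe l).
Proof. by rewrite Gp_restr_sq Gp_dg. Qed.

Lemma Gp0 p (W A : 'M[C]_p) : (Gp W A)`_0 = \det W.
Proof.
rewrite -horner_coef0 /Gp -horner_evalE -det_map_mx; congr (\det _).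
apply/matrixP => i j; rewrite !mxE /= horner_evalE hornerD hornerC hornerM hornerX hornerC.
by rewrite mul0r addr0.
Qed.

Lemma det_kahler p (W : 'M[C]_p) : kahler W -> 0 < \det W.
Proof.
move=> hW; have [R0 [l [hR0 [eW _]]]] := simdiag hW hW.1.
rewrite eW det_restr det1 mulr1 mul_conjC_gt0.
by rewrite -unitfE -unitmxE.
Qed.
Lemma restr_col'E n (P M : 'M[C]_n.+1) :
  restr (col' ord_max P) M = row' ord_max (col' ord_max (restr P M)).
Proof.
rewrite /restr col'_mul row'_mul row'_mul tr_col'.
by rewrite /conjm map_col'.
Qed.

Lemma GpC p (B : 'M[C]_(p.+1, p)) (v : 'rV[C]_p.+1) (W A : 'M[C]_p.+1) :
  v *m B = 0 -> v != 0 ->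
  exists c : C, Gp (restr B W) (restr B A) =
    c%:P * (\det (polyM W + 'X *: polyM A + polyM (v^T *m conjm v)) - Gp W A).
Proof.
move=> hvB hv0.
have [r hr] : exists r, v 0 r != 0.
  case: (pickP (fun r => v 0 r != 0)) => [r hr|h]; first by exists r.
  move/eqP: hv0; case; apply/rowP => j; rewrite mxE.
  by move: (h j) => /negbFE/eqP.
pose x : 'cV[C]_p.+1 := (v 0 r)^-1 *: delta_mx r 0.
pose P : 'M[C]_p.+1 :=
  \matrix_(i, j) (oapp (fun j' => B i j') (x i 0) (unlift ord_max j)).
have hPB : col' ord_max P = B.
  by apply/matrixP => a b; rewrite !mxE liftK.
have hvP : v *m P = delta_mx 0 ord_max.
  apply/rowP => j; rewrite !mxE.
  case: (unliftP ord_max j) => [j'|] ->.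
    under eq_bigr do rewrite mxE liftK /=.
    have := hvB; move/matrixP => /(_ 0 j'); rewrite !mxE => ->.
    by rewrite liftNe andbF.
  under eq_bigr do rewrite mxE unlift_none /=.
  rewrite !eqxx /= (bigD1 r) //= big1 ?addr0.
    by rewrite !mxE !eqxx /= mulr1 mulfV.
  by move=> i hi; rewrite !mxE (negbTE hi) /= mulr0 mulr0.
have hE : restr P (v^T *m conjm v) = delta_mx ord_max ord_max.
  rewrite /restr mulmxA -trmx_mul hvP -mulmxA -conjmM hvP.
  by rewrite /conjm map_delta_mx trmx_delta mul_delta_mx.
set Y := polyM (restr P W) + 'X *: polyM (restr P A).
have hY : row' ord_max (col' ord_max Y) = polyM (restr B W) + 'X *: polyM (restr B A).
  rewrite -hPB !restr_col'E; apply/matrixP => a b; rewrite !mxE.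
  by [].
have hYd : Y + delta_mx ord_max ord_max = (polyM P)^T *m
    (polyM W + 'X *: polyM A + polyM (v^T *m conjm v)) *m polyM (conjm P).
  have -> : delta_mx ord_max ord_max = polyM (restr P (v^T *m conjm v)).
    by rewrite hE /polyM map_delta_mx.
  by rewrite /Y !polyM_restr !mulmxDr !mulmxDl -!scalemxAr -!scalemxAl.
have hY0 : Y = (polyM P)^T *m (polyM W + 'X *: polyM A) *m polyM (conjm P).
  by rewrite /Y !polyM_restr mulmxDr mulmxDl -scalemxAr -scalemxAl.
exists (\det P * (\det P)^*).
have := cof_last Y; rewrite hYd hY hY0 !detP_restr => h.
by rewrite /Gp mulrBr h addrAC subrr add0r.
Qed.
Lemma Gform p (B : 'M[C]_(p.+1, p)) (v : 'rV[C]_p.+1) (R0 : 'M[C]_p.+1)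
    (l : 'I_p.+1 -> R) :
  v *m B = 0 -> v != 0 -> R0 \in unitmx ->
  exists c : C, Gp (restr B (restr R0 1%:M)) (restr B (restr R0 (dg l))) =
    c%:P * \sum_i (((v *m invmx R0) 0 i * ((v *m invmx R0) 0 i)^*)%:P *
                   map_poly rc (Pe (fun j : 'I_p => l (lift i j)))).
Proof.
move=> hvB hv0 hR0.
have [c1 ->] := GpC (restr R0 1%:M) (restr R0 (dg l)) hvB hv0.
set z := v *m invmx R0.
have hz : v^T *m conjm v = restr R0 (z^T *m conjm z).
  by rewrite /restr mulmxA -trmx_mul -mulmxA -conjmM /z mulmxKV.
rewrite hz.
have e1 : polyM (restr R0 1%:M) + 'X *: polyM (restr R0 (dg l)) +
    polyM (restr R0 (z^T *m conjm z)) = (polyM R0)^T *m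
    (polyM 1%:M + 'X *: polyM (dg l) + polyM (z^T *m conjm z)) *m polyM (conjm R0).
  by rewrite !polyM_restr !mulmxDr !mulmxDl -!scalemxAr -!scalemxAl.
rewrite e1 detP_restr Gp_sim.
have e2 : polyM 1%:M + 'X *: polyM (dg l) + polyM (z^T *m conjm z) =
   \matrix_(i, j) ((i == j)%:R * (1 + (rc (l i))%:P * 'X) + (z 0 i)%:P * ((z 0 j)^*)%:P).
  apply/matrixP => i j; rewrite !mxE big_ord1 !mxE.
  case: (i == j); rewrite /= ?mulr1n ?mulr0n ?mul1r ?mul0r ?polyCM ?polyC0 ?mulr0 ?add0r ?addr0 //.
  by rewrite polyC1 (mulrC 'X).
rewrite e2 det_rank1 mapPe.
exists (c1 * (\det R0 * (\det R0)^*)).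
rewrite [X in _ * (X - _)]mulrDr addrAC subrr add0r !polyCM !mulrA.
congr (_ * _); apply: eq_bigr => i _.
by rewrite big_lift_ne mapPe polyCM.
Qed.
Lemma coef_pos p (c : C) (z : 'rV[C]_p.+1) (l : 'I_p.+1 -> R) (G : {poly C}) (k : nat) :
  G = c%:P * \sum_(i < p.+1) ((z 0 i * (z 0 i)^*)%:P *
                      map_poly rc (Pe (fun j : 'I_p => l (lift i j)))) ->
  0 < G`_0 -> (forall i : 'I_p.+1, 0 <= sig (fun j : 'I_p => l (lift i j)) k) ->
  (exists2 i : 'I_p.+1, z 0 i != 0 & 0 < sig (fun j : 'I_p => l (lift i j)) k) -> 0 < (G`_k : C).
Proof.
move=> -> h0 hge [i0 hz hs].
have cE j : (c%:P * \sum_(i < p.+1) ((z 0 i * (z 0 i)^*)%:P *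
      map_poly rc (Pe (fun j : 'I_p => l (lift i j)))))`_j =
    c * \sum_(i < p.+1) (z 0 i * (z 0 i)^*) * rc (sig (fun j : 'I_p => l (lift i j)) j).
  by rewrite coefCM coef_sum; congr (_ * _); apply: eq_bigr => i _; rewrite coefCM coef_map.
rewrite cE in h0 *.
have e0 : \sum_(i < p.+1) (z 0 i * (z 0 i)^*) * rc (sig (fun j : 'I_p => l (lift i j)) 0)
    = \sum_(i < p.+1) (z 0 i * (z 0 i)^*).
  by apply: eq_bigr => i _; rewrite sig0 rmorph1 mulr1.
rewrite e0 in h0.
set S0 := \sum_(i < p.+1) (z 0 i * (z 0 i)^*) in h0.
have hS0 : 0 <= S0 by apply: sumr_ge0 => i _; exact: mul_conjC_ge0.
have hS0' : S0 != 0 by apply/negP => /eqP h; move: h0; rewrite h mulr0 ltxx.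
have hS0p : 0 < S0 by rewrite lt_def hS0' hS0.
have hc : 0 < c by move: h0; rewrite pmulr_lgt0.
rewrite cE; apply: mulr_gt0 => //.
rewrite (bigD1 i0) //=; apply: ltr_wpDr.
  apply: sumr_ge0 => i _; apply: mulr_ge0; first exact: mul_conjC_ge0.
  by rewrite lec0R.
by apply: mulr_gt0; [rewrite mul_conjC_gt0 | rewrite ltc0R].
Qed.
Lemma sum_delta1 m (a : 'I_m) : \sum_(i < m) ((i == a)%:R : C) = 1.
Proof. by rewrite (bigD1 a) //= eqxx big1 ?addr0 // => i /negbTE ->. Qed.

Lemma hform1_gt0 p (y : 'cV[C]_p) : y != 0 -> 0 < hform 1%:M y.
Proof.
move=> hy; rewrite -diag_const_mx hform_diag.
have [r hr] : exists r, y r 0 != 0.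
  case: (pickP (fun r => y r 0 != 0)) => [r hr|h]; first by exists r.
  move/eqP: hy; case; apply/colP => j; rewrite mxE.
  by move: (h j) => /negbFE/eqP.
rewrite (bigD1 r) //=; apply: ltr_wpDr.
  by apply: sumr_ge0 => i _; rewrite mxE mul1r mul_conjC_ge0.
by rewrite mxE mul1r mul_conjC_gt0.
Qed.

Lemma real11_1 p : real11 (1%:M : 'M[C]_p).
Proof. by rewrite /real11 trmx1 /conjm map_mx1. Qed.

Lemma real11_dg p (l : 'I_p -> R) : real11 (dg l).
Proof. by rewrite /real11 conjm_dg /dg tr_diag_mx. Qed.

Lemma kahler_restr p q (B : 'M[C]_(p, q)) W :
  kahler W -> (forall w : 'cV[C]_q, B *m w = 0 -> w = 0) -> kahler (restr B W).
Proof.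
case=> hW hpos hB; split; first exact: real11_restr.
move=> w hw; rewrite hform_restr; apply: hpos.
by apply: contra hw => /eqP /hB ->.
Qed.

Lemma Dlem n (mu : 'I_n.+1 -> R) : exists nu : 'I_n -> R,
  forall j, (n.+1)%:R * sig nu j = (n.+1 - j)%:R * sig mu j.
Proof.
pose B : 'M[C]_(n.+1, n) := \matrix_(i, j) ((i == lift ord_max j)%:R - (i == ord_max)%:R).
pose v : 'rV[C]_n.+1 := const_mx 1.
have hvB : v *m B = 0.
  apply/rowP => j; rewrite !mxE.
  under eq_bigr do rewrite !mxE mul1r.
  by rewrite sumrB !sum_delta1 subrr.
have hv0 : v != 0.
  apply/negP => /eqP /rowP /(_ ord0); rewrite !mxE => /eqP; by rewrite oner_eq0.
have binj : forall w : 'cV[C]_n, B *m w = 0 -> w = 0.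
  move=> w hw; apply/colP => a.
  move/colP: hw => /(_ (lift ord_max a)); rewrite !mxE => h; rewrite -h.
  rewrite (bigD1 a) //= !mxE eqxx liftNe subr0 mul1r big1 ?addr0 // => b hb.
  by rewrite !mxE liftNe subr0 (inj_eq (@lift_inj _ _)) eq_sym (negbTE hb) mul0r.
have hk : kahler (restr B 1%:M).
  apply: kahler_restr => //; split; first exact: real11_1.
  exact: hform1_gt0.
have [c hc] := Gform mu hvB hv0 (unitmx1 _ _).
have [R' [nu [hR' [e1 e2]]]] := simdiag hk (real11_restr B (real11_dg mu)).
rewrite !restr1 e1 e2 Gp_sim invmx1 mulmx1 in hc.
set d := \det R' * (\det R')^* in hc.
have hd : d != 0 by rewrite /d -normCK sqrf_eq0 normr_eq0 -unitfE -unitmxE.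
have hw : forall i, v 0 i * (v 0 i)^* = 1 by move=> i; rewrite mxE conjC1 mulr1.
have eS : \sum_(i < n.+1) ((v 0 i * (v 0 i)^*)%:P *
      map_poly rc (Pe (fun j : 'I_n => mu (lift i j)))) =
    \sum_(i < n.+1) map_poly rc (Pe (fun j : 'I_n => mu (lift i j))).
  by apply: eq_bigr => i _; rewrite hw polyC1 mul1r.
rewrite eS in hc.
move: hc => h.
exists nu => j.
have hcoef : forall j, d * rc (sig nu j) = c * \sum_(i < n.+1) rc (sig (fun k : 'I_n => mu (lift i k)) j).
  move=> j'; have := congr1 (fun P : {poly C} => P`_j') h.
  by rewrite coefCM coef_map coefCM coef_sum /=; under [in RHS]eq_bigr do rewrite coef_map.
have h0 := hcoef 0%N.
have e0 : \sum_(i < n.+1) rc (sig (fun k : 'I_n => mu (lift i k)) 0) = (n.+1)%:R.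
  under eq_bigr do rewrite sig0 rmorph1.
  by rewrite sumr_const card_ord.
rewrite sig0 rmorph1 mulr1 e0 in h0.
have hc0 : c != 0 by apply: contra hd; rewrite h0 => /eqP ->; rewrite mul0r.
have := hcoef j; rewrite h0 -mulrA => /(mulfI hc0).
rewrite -rmorph_sum sum_lift -(rmorph_nat rc) -rmorphM.
exact: (@complexI R).
Qed.
End Cx.

Section Main.
Variable R : realType.
Local Notation C := (complex R).
Local Notation rc := (real_complex R).

Lemma rankB_inj p (B : 'M[C]_(p.+1, p)) : \rank B = p ->
  forall w : 'cV[C]_p, B *m w = 0 -> w = 0.
Proof.
move=> hB w hw.
have hf : row_free B^T by rewrite /row_free mxrank_tr hB.
have : (w^T *m B^T == 0) by rewrite -trmx_mul hw trmx0.
by rewrite mulmx_free_eq0 // => /eqP h; apply: trmx_inj; rewrite h trmx0.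
Qed.

Lemma kerB p (B : 'M[C]_(p.+1, p)) : \rank B = p ->
  exists2 v : 'rV[C]_p.+1, v != 0 & v *m B = 0.
Proof.
move=> hB; exists (nz_row (kermx B)).
  rewrite nz_row_eq0 -mxrank_eq0 mxrank_ker hB.
  by rewrite subSn // subnn.
by apply/sub_kermxP; exact: nz_row_sub.
Qed.

Lemma z_nz p (v : 'rV[C]_p) (R0 : 'M[C]_p) : R0 \in unitmx -> v != 0 ->
  exists i, (v *m invmx R0) 0 i != 0.
Proof.
move=> hR0 hv.
case: (pickP (fun i => (v *m invmx R0) 0 i != 0)) => [i hi|h]; first by exists i.
have hz : v *m invmx R0 = 0.
  by apply/rowP => j; rewrite [X in _ = X]mxE; move: (h j) => /negbFE/eqP.
by move: hv; rewrite -(mulmxKV hR0 v) hz mul0mx eqxx.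
Qed.

Lemma fact_pos k q : (0 : C) < (k`! * q`!)%:R.
Proof. by rewrite ltr0n muln_gt0 !fact_gt0. Qed.

End Main.


Unset Implicit Arguments.

Theorem lemma2p1 (R : realType) (n m : nat) (W A : 'M[complex R]_n) :
  kahler W -> real11 A -> (1 <= m <= n)%N -> m_positive m W A ->
  (forall k : nat, (1 <= k <= m.-1)%N ->
     forall B : 'M[complex R]_(n, n.-1), \rank B = n.-1 ->
       0 < wedge_coef k (restr B A) (restr B W))
  /\
  ((m <= n.-1)%N -> semipositive A ->
     exists S : 'M[complex R]_n,
       (\rank S < n)%N /\
       forall v : 'rV[complex R]_n, ~~ (v <= S)%MS ->
         forall B : 'M[complex R]_(n, n.-1),
           \rank B = n.-1 -> v *m B = 0 ->
           0 < wedge_coef m (restr B A) (restr B W)).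
Proof.
move=> hW hA hm hpos.
case: n W A hW hA hm hpos => [|p] W A hW hA hm hpos.
  by case/andP: hm => h1 h2; move: (leq_trans h1 h2).
have [R0 [l [hR0 [eW eA]]]] := simdiag hW hA.
have hd : 0 < \det R0 * (\det R0)^* by rewrite mul_conjC_gt0 -unitfE -unitmxE.
have hG : forall k, (0 < k <= m)%N -> 0 < sig l k.
  move=> k hk; have := hpos k hk; rewrite wedgeE eW eA Gp_sim coefCM coef_map.
  by rewrite pmulr_rgt0 ?fact_pos // pmulr_rgt0 // ltc0R.
have G0 : forall B : 'M[complex R]_(p.+1, p), \rank B = p ->
    0 < (Gp (restr B W) (restr B A))`_0.
  move=> B hB; rewrite Gp0; apply: det_kahler; apply: kahler_restr => //.
  exact: rankB_inj.
split.
  move=> k hk B hB.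
  have [v hv0 hvB] := kerB hB.
  have [c hc] := @Gform R p B v R0 l hvB hv0 hR0.
  rewrite -eW -eA in hc.
  rewrite wedgeE pmulr_rgt0 ?fact_pos //.
  have hk' : (k < m)%N by case/andP: hk => h1 h2; lia.
  have gar := @garding R (@Dlem R) p l m.
  apply: (coef_pos hc (G0 B hB)).
    by move=> i; apply: ltW; apply: gar.
  have [i hi] := z_nz hR0 hv0.
  by exists i => //; apply: gar.
move=> hmp [_ hsemi].
have hl : forall i, 0 <= l i.
  move=> i; have := hsemi (invmx R0 *m delta_mx i 0).
  by rewrite eA hform_restr mulKVmx // hform_diag_delta mxE lec0R.
have hcnt : (m <= cnt l)%N.
  have [_ <-] := sig_nonneg hl m; apply: hG.
  by case/andP: hm => h1 _; rewrite h1 leqnn.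
pose D : 'M[complex R]_p.+1 := diag_mx (\row_i (((0 < l i)%R)%:R)).
exists (if cnt l == m then D *m R0 else 0).
split.
  case: eqP => hc; last by rewrite mxrank0.
  have [i0 hi0] : exists i0, ~~ (0 < l i0).
    case: (pickP (fun i => ~~ (0 < l i))) => [i hi|h]; first by exists i.
    have : cnt l = p.+1.
      rewrite /cnt (eq_bigr (fun _ => 1%N)) ?sum1_card ?card_ord //.
      by move=> i _; move: (h i) => /negbFE ->.
    by move: hmp; rewrite -hc => /= h1 h2; lia.
  apply: (leq_ltn_trans (mxrankM_maxl _ _)).
  rewrite ltn_neqAle rank_leq_row andbT.
  apply/negP => /eqP hr.
  have : D \in unitmx by rewrite -row_free_unit /row_free hr.
  rewrite unitmxE det_diag unitfE (bigD1 i0) //= mxE (negbTE hi0) mul0r eqxx.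
  by [].
move=> v hvS B hB hvB.
have hv0 : v != 0 by apply: contra hvS => /eqP ->; rewrite sub0mx.
have [c hc] := @Gform R p B v R0 l hvB hv0 hR0.
rewrite -eW -eA in hc.
rewrite wedgeE pmulr_rgt0 ?fact_pos //.
apply: (coef_pos hc (G0 B hB)).
  by move=> i; have [] := sig_nonneg (fun j : 'I_p => hl (lift i j)) m.
set z := v *m invmx R0.
have hzR : z *m R0 = v by rewrite /z mulmxKV.
have hz0 : exists i, z 0 i != 0 by exact: z_nz hR0 hv0.
clearbody z.
suff [i [hzi hsi]] : exists i, z 0 i != 0 /\ (m <= cnt (fun j : 'I_p => l (lift i j)))%N.
  exists i => //.
  by have [_ ->] := sig_nonneg (fun j : 'I_p => hl (lift i j)) m.
case: eqP hvS => hcm hvS; last first.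
  have [i hi] := hz0.
  exists i; split => //.
  move: (cnt_lift l i); case: (0 < l i) => /= h; lia.
case: (pickP (fun i => (z 0 i != 0) && ~~ (0 < l i))) => [i /andP[h1 h2]|h].
  exists i; split => //.
  by move: (cnt_lift l i); rewrite (negbTE h2) /= => h; lia.
exfalso; move/negP: hvS; apply.
have -> : v = z *m (D *m R0).
  rewrite mulmxA.
  have -> : z *m D = z.
    rewrite /D mul_mx_diag; apply/matrixP => a b; rewrite !mxE ord1.
    case hb : (0 < l b); first by rewrite mulr1.
    move: (h b); rewrite hb andbT /= => /negbFE/eqP ->.
    by rewrite mul0r.
  by rewrite hzR.
exact: submxMl.
Qed.
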